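(* Let $L$ be a finite lattice, $\varphi\in M_1(L)$, and let $(a_1,\dots,a_n)$ be a monotone path in $L$. Set $\varphi_0=\varphi$ and $\varphi_i=\Lambda_{a_i}\varphi_{i-1}$ for $i=1,\dots,n$. Let $\Psi_i\in M_\infty(\mathcal L)$ satisfy $\Pi(\Psi_i)=\lambda(\varphi_i;a_{i+1},\cdot)$ for $i=0,\dots,n-1$, let $\Psi_n\in M_\infty(\mathcal L)$ satisfy $\Pi(\Psi_n)=\varphi_n$, and put $\Phi=\sum_{i=0}^n\Psi_i$. For $x\in L$ and $1\le k\le n$ let $\pi^x_{a_1,\ldots,a_k}$ be the function on $\mathcal L$ equal to $1$ at $V$ if $x\in V$ and $a_i\notin V$ for all $i=1,\dots,k$, and $0$ otherwise. Then $$\Lambda_{a_1,\ldots,a_k}\varphi(x)=\Phi\big(\pi^x_{a_1,\ldots,a_k}\big)\qquad\text{for all }x\in L\text{ and }k=1,\dots,n.$$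
   Context: $L$ is a finite lattice with join $\vee$. $M_1(L)$ is the set of nonnegative monotone real functions on $L$. A path from $a$ to $b$ is a sequence $H=(h_0,\dots,h_m)$ of distinct elements of $L$ with $h_0=a$, $h_m=b$; $\varphi(H)=\sum_{i=0}^m\varphi(h_i)-\sum_{i=1}^m\varphi(h_{i-1}\vee h_i)$; $\lambda(\varphi;a,b)=\max\{\varphi(H): H\text{ a path from }a\text{ to }b\}$; $\Lambda_a\varphi(x)=\varphi(x)-\lambda(\varphi;a,x)$ and $\Lambda_{a_1,\ldots,a_k}\varphi=\Lambda_{a_k}(\Lambda_{a_1,\ldots,a_{k-1}}\varphi)$; $\Lambda_a$ maps $M_1(L)$ into itself and so does $\lambda(\varphi;a,\cdot)$ for $\varphi\in M_1(L)$. A monotone path is a sequence $(a_1,\dots,a_n)$ of distinct elements of $L$ such that $i<j$ whenever $a_i<a_j$. $\mathcal L$ is the set of nonempty up-sets of $L$, ordered by $U\preceq V$ iff $U\supseteq V$ (meet = union). $M_\infty(\mathcal L)$ is the set of nonnegative completely monotone functions on $(\mathcal L,\preceq)$; $\Pi(\Psi)(x)=\Psi(\{y:y\ge x\})$. Every element of $M_1(L)$ is $\Pi(\Psi)$ for some $\Psi\in M_\infty(\mathcal L)$. For $\Phi\in M_\infty(\mathcal L)$ with Möbius inverse $F$ (the unique $F$ with $\Phi(U)=\sum_{V\preceq U}F(V)$) and $g$ a real function on $\mathcal L$, $\Phi(g)=\sum_{V\in\mathcal L}F(V)g(V)$. *)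

(* Defs.v *)
From HB Require Import structures.
From mathcomp Require Import all_boot all_order all_algebra.
Set Implicit Arguments. Unset Strict Implicit. Unset Printing Implicit Defensive.
Import Order.TTheory GRing.Theory Num.Theory.
Local Open Scope ring_scope.

Section Defs.
Variables (d : Order.disp_t) (L : finLatticeType d) (R : realFieldType).

Definition inM1 (phi : L -> R) : Prop :=
  (forall x, 0 <= phi x) /\ (forall x y : L, (x <= y)%O -> phi x <= phi y).

Definition pathval (phi : L -> R) (a : L) (s : seq L) : R :=
  \sum_(h <- a :: s) phi h - \sum_(p <- zip (a :: s) s) phi (Order.join p.1 p.2).

Definition is_path_from (a b : L) (s : seq L) : bool := uniq (a :: s) && (last a s == b).

(* A path a :: s has size s < #|L|; the initial value of the max is the value
   of the path (a) if a = b, or (a, b) otherwise, which is itself a path. *)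
Definition lam (phi : L -> R) (a b : L) : R :=
  \big[Num.max/pathval phi a (if a == b then [::] else [:: b])]_(m < #|L|.+1)
     \big[Num.max/pathval phi a (if a == b then [::] else [:: b])]_(t : m.-tuple L
          | is_path_from a b t) pathval phi a t.

Definition Lam (a : L) (phi : L -> R) : L -> R := fun x => phi x - lam phi a x.

Definition Lams (s : seq L) (phi : L -> R) : L -> R :=
  foldl (fun psi b => Lam b psi) phi s.

(* the set \mathcal L of nonempty up-sets of L; U precedes V iff V \subset U *)
Definition isUp (U : {set L}) : bool :=
  (U != set0) && [forall x, forall y, ((x \in U) && (x <= y)%O) ==> (y \in U)].

Definition PiL (Psi : {set L} -> R) : L -> R := fun x => Psi [set y | (x <= y)%O].

(* M_infty(\mathcal L): nonnegative completely monotone functions on (\mathcal L, precedes):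
   for every k and all U, U_1..U_k in \mathcal L with U_i precedes U,
   Psi(U) >= sum_{emptyset <> I} (-1)^{|I|+1} Psi(meet_{i in I} U_i),
   where the meet in (\mathcal L, precedes) is the union. *)
Definition inMinf (Psi : {set L} -> R) : Prop :=
  (forall U, isUp U -> 0 <= Psi U) /\
  (forall (k : nat) (U : {set L}) (Us : 'I_k -> {set L}),
      isUp U -> (forall i, isUp (Us i)) -> (forall i, U \subset Us i) ->
      \sum_(I : {set 'I_k} | I != set0)
          (-1) ^+ (#|I|.+1) * Psi (\bigcup_(i in I) Us i) <= Psi U).

(* Moebius inverse: the unique F with Phi(U) = sum_{V in \mathcal L, V precedes U} F(V),
   i.e. F(U) = Phi(U) - sum_{V in \mathcal L, U proper subset V} F(V),
   computed by recursion of sufficient depth. *)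
Fixpoint mobk (Phi : {set L} -> R) (k : nat) (U : {set L}) : R :=
  match k with
  | 0 => 0
  | k'.+1 => Phi U - \sum_(V : {set L} | isUp V && (U \proper V)) mobk Phi k' V
  end.

Definition mobius (Phi : {set L} -> R) (U : {set L}) : R := mobk Phi #|L|.+1 U.

(* Phi(g) = sum_{V in \mathcal L} F(V) g(V) *)
Definition integ (Phi : {set L} -> R) (g : {set L} -> R) : R :=
  \sum_(V : {set L} | isUp V) mobius Phi V * g V.

Definition piX (x : L) (s : seq L) (V : {set L}) : R :=
  if (x \in V) && all (fun b => b \notin V) s then 1 else 0.

End Defs.

(* a : 'I_n -> L is a monotone path (a_1,..,a_n) (0-indexed): distinct, and
   i < j whenever a_i < a_j *)
Definition monotone_path d (L : finLatticeType d) n (a : 'I_n -> L) : Prop :=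
  injective a /\ (forall i j : 'I_n, (a i < a j)%O -> (i < j)%N).

Definition apref d (L : finLatticeType d) n (a : 'I_n -> L) (k : nat) : seq L :=
  [seq a j | j <- take k (enum 'I_n)].
Arguments piX {d L R}.

(* Main.v *)
Require Import Defs.
From mathcomp Require Import all_boot all_order all_algebra.
From mathcomp Require Import zify ring lra.
Set Implicit Arguments. Unset Strict Implicit. Unset Printing Implicit Defensive.
Import Order.TTheory GRing.Theory Num.Theory.
Local Open Scope ring_scope.

Section Mob.
Variables (d : Order.disp_t) (L : finLatticeType d) (R : realFieldType).
Implicit Types (Psi : {set L} -> R) (U V W : {set L}).

Lemma mobk_stab Psi k U : (#|L| < k + #|U|)%N -> mobk Psi k.+1 U = mobk Psi k U.
Proof.
elim: k U => [|k IH] U hk.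
  by move: (leq_ltn_trans (max_card U) hk); rewrite ?add0n ltnn.
rewrite [LHS]/= [RHS]/=; congr (_ - _); apply: eq_bigr => V /andP[_ hUV].
apply: IH; have := proper_card hUV; lia.
Qed.

Lemma mobE Psi U : mobius Psi U =
  Psi U - \sum_(V | isUp V && (U \proper V)) mobius Psi V.
Proof.
rewrite /mobius [LHS]/=; congr (_ - _); apply: eq_bigr => V /andP[_ hUV].
rewrite mobk_stab //; have := proper_card hUV; lia.
Qed.

Lemma mobSum Psi U : isUp U ->
  Psi U = \sum_(V | isUp V && (U \subset V)) mobius Psi V.
Proof.
move=> hU; rewrite (bigD1 U) /=; last by rewrite hU subxx.
rewrite (mobE Psi U).
rewrite (eq_bigl (fun V => isUp V && (U \proper V))); first by ring.
move=> V /=; rewrite properEneq eq_sym; case: (isUp V); case: (U \subset V);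
  by rewrite ?andbF ?andbT.
Qed.

Lemma mob_sum (I : finType) (Ps : I -> {set L} -> R) k U :
  mobk (fun U => \sum_i Ps i U) k U = \sum_i mobk (Ps i) k U.
Proof.
elim: k U => [|k IH] U /=; first by rewrite big1.
rewrite sumrB; congr (_ - _); rewrite (exchange_big) /=.
by apply: eq_bigr => V _; rewrite IH.
Qed.

Lemma alt_sum k (T : {set 'I_k}) :
  \sum_(I : {set 'I_k}) (-1) ^+ #|I| * (I \subset T)%:R = (T == set0)%:R :> R.
Proof.
have := @bigA_distr R 0 1 *%R +%R 'I_k (fun i => if i \in T then -1 else 0) (fun _ => 1).
rewrite (eq_bigl (fun _ => true)) //.
have -> : \prod_(i < k) ((if i \in T then -1 else 0) + 1) = (T == set0)%:R :> R.
  case: (eqVneq T set0) => [-> | /set0Pn[i hi]].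
    by rewrite big1 // => i _; rewrite in_set0 add0r.
  by rewrite (bigD1 i) //= hi addNr mul0r.
move=> ->; apply: eq_bigr => J _.
case: (boolP (J \subset T)) => hJ.
  rewrite mulr1 (eq_bigr (fun i => if i \in J then -1 else 1)); last first.
    by move=> i _; case: ifP => // hi; rewrite (subsetP hJ i hi).
  by rewrite -big_mkcond prodr_const.
case/subsetPn: hJ => i hiJ hiT.
by rewrite mulr0 (bigD1 i) //= hiJ (negbTE hiT) mul0r.
Qed.

Lemma alt_sum2 k (T : {set 'I_k}) :
  \sum_(I : {set 'I_k} | I != set0) (-1) ^+ (#|I|.+1) * (I \subset T)%:R
  = (T != set0)%:R :> R.
Proof.
have := alt_sum T; rewrite (bigD1 set0) //= cards0 expr0 sub0set mul1r.
move=> H.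
under eq_bigr do rewrite exprS mulN1r mulNr.
rewrite sumrN.
have -> : \sum_(i | i != set0) (-1) ^+ #|i| * (i \subset T)%:R = (T == set0)%:R - 1 :> R.
  by rewrite -H addrC addrK.
by case: (T == set0); rewrite /= ?subrr ?oppr0 // opprB subr0.
Qed.

Lemma isUp_bigcup k (I : {set 'I_k}) (Us : 'I_k -> {set L}) :
  I != set0 -> (forall i, isUp (Us i)) -> isUp (\bigcup_(i in I) Us i).
Proof.
case/set0Pn => i hi hU; apply/andP; split.
  have /andP[hne _] := hU i; apply/set0Pn; case/set0Pn: hne => x hx.
  by exists x; apply/bigcupP; exists i.
apply/forallP => x; apply/forallP => y; apply/implyP => /andP[/bigcupP[j hj hx] hxy].
apply/bigcupP; exists j => //.
by have /andP[_ /forallP/(_ x)/forallP/(_ y)/implyP] := hU j; apply; rewrite hx hxy.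
Qed.

Lemma mob_ge0 Psi : inMinf Psi -> forall V, isUp V -> 0 <= mobius Psi V.
Proof.
move=> [h0 hM] V hV.
set S := [set W | isUp W && (V \proper W)].
pose Us := fun i : 'I_#|S| => enum_val i.
have hUsS i : Us i \in S := enum_valP i.
have hUs i : isUp (Us i) by move: (hUsS i); rewrite inE => /andP[].
have hVUs' i : V \proper Us i by move: (hUsS i); rewrite inE => /andP[].
have hVUs i : V \subset Us i by exact: proper_sub (hVUs' i).
have := hM #|S| V Us hV hUs hVUs.
suff -> : \sum_(I : {set 'I_#|S|} | I != set0)
     (-1) ^+ (#|I|.+1) * Psi (\bigcup_(i in I) Us i)
   = \sum_(W | isUp W && (V \proper W)) mobius Psi W.
  by rewrite (mobE Psi V) subr_ge0.
transitivity (\sum_(I : {set 'I_#|S|} | I != set0) \sum_(W | isUp W)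
    (-1) ^+ (#|I|.+1) * ((I \subset [set i | Us i \subset W])%:R * mobius Psi W)).
  apply: eq_bigr => I hI; rewrite (mobSum Psi (isUp_bigcup hI hUs)) mulr_sumr.
  rewrite big_mkcondr; apply: eq_bigr => W _.
  have -> : (\bigcup_(i in I) Us i \subset W) = (I \subset [set i | Us i \subset W]).
    apply/bigcupsP/subsetP => H i hi; first by rewrite inE; exact: H.
    by move: (H i hi); rewrite inE.
  by case: ifP => _; rewrite ?mul1r ?mul0r ?mulr0.
rewrite exchange_big /= [RHS]big_mkcondr; apply: eq_bigr => W hW.
under eq_bigr do rewrite mulrA.
rewrite -mulr_suml alt_sum2.
have -> : ([set i | Us i \subset W] != set0) = (V \proper W).
  apply/set0Pn/idP.
    by case=> i; rewrite inE => hi; exact: proper_sub_trans (hVUs' i) hi.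
  move=> hVW; have hWS : W \in S by rewrite inE hW hVW.
  by exists (enum_rank_in hWS W); rewrite inE /Us enum_rankK_in.
by case: ifP; rewrite ?mul1r ?mul0r.
Qed.

Lemma pathval_le (phi : L -> R) : (forall x y : L, (x <= y)%O -> phi x <= phi y) ->
  forall s a, pathval phi a s <= phi a.
Proof.
move=> hm; elim=> [|b s IH] a.
  by rewrite /pathval big_seq1 big_nil subr0.
move: (IH b) (hm _ _ (leUr b a)); rewrite /pathval /= !big_cons /=.
lra.
Qed.

Lemma lam_le (phi : L -> R) : (forall x y : L, (x <= y)%O -> phi x <= phi y) ->
  forall a b, lam phi a b <= phi a.
Proof.
move=> hm a b; rewrite /lam.
apply: (big_ind (fun v => v <= phi a)); first exact: pathval_le.
  by move=> u v hu hv; rewrite ge_max hu hv.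
move=> m _; apply: (big_ind (fun v => v <= phi a)); first exact: pathval_le.
  by move=> u v hu hv; rewrite ge_max hu hv.
by move=> t _; apply: pathval_le.
Qed.

Lemma lam_ge (phi : L -> R) a b :
  pathval phi a (if a == b then [::] else [:: b]) <= lam phi a b.
Proof.
rewrite /lam.
apply: (big_rec (fun v => _ <= v)); first exact: lexx.
move=> m v _ hv; rewrite le_max hv orbT //.
Qed.

Lemma lam_aa (phi : L -> R) : (forall x y : L, (x <= y)%O -> phi x <= phi y) ->
  forall a, lam phi a a = phi a.
Proof.
move=> hm a; apply/eqP; rewrite eq_le lam_le //=.
by have := lam_ge phi a a; rewrite eqxx /pathval big_seq1 big_nil subr0.
Qed.

Lemma isUp_up (y : L) : isUp [set z | (y <= z)%O].
Proof.
apply/andP; split; first by apply/set0Pn; exists y; rewrite inE.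
apply/forallP => u; apply/forallP => v; apply/implyP => /andP[].
by rewrite !inE => h1 h2; exact: le_trans h1 h2.
Qed.

Lemma isUp_closed V (y z : L) : isUp V -> y \in V -> (y <= z)%O -> z \in V.
Proof.
by move=> /andP[_ /forallP/(_ y)/forallP/(_ z)/implyP] h hy hyz; apply: h; rewrite hy hyz.
Qed.

Lemma exists_top (x0 : L) : exists t : L, forall y, (y <= t)%O.
Proof.
exists (foldr Order.join x0 (enum L)) => y.
have : y \in enum L by rewrite mem_enum.
elim: (enum L) => //= z s IH; rewrite inE => /orP[/eqP-> | /IH h].
  exact: leUl.
exact: le_trans h (leUr _ _).
Qed.

Lemma top_in V (t : L) : (forall y, (y <= t)%O) -> isUp V -> t \in V.
Proof.
move=> ht hV; have /andP[/set0Pn[v hv] _] := hV.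
exact: isUp_closed hV hv (ht v).
Qed.

Lemma mobius_sum (I : finType) (Ps : I -> {set L} -> R) U :
  mobius (fun U => \sum_i Ps i U) U = \sum_i mobius (Ps i) U.
Proof. exact: mob_sum. Qed.

End Mob.

Lemma memtake n k (i : 'I_n) : (i \in take k (enum 'I_n)) = (i < k)%N.
Proof.
rewrite in_take ?mem_enum // -{1}(nth_ord_enum i i) index_uniq ?enum_uniq //.
by rewrite size_enum_ord.
Qed.

Lemma Lams_S d (L : finLatticeType d) (R : realFieldType) (phi : L -> R) n
   (a : 'I_n -> L) m (hm : (m < n)%N) :
  Lams (apref a m.+1) phi = Lam (a (Ordinal hm)) (Lams (apref a m) phi).
Proof.
rewrite /Lams /apref (take_nth (Ordinal hm)) ?size_enum_ord // map_rcons foldl_rcons.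
congr (Lam (a _) _); exact: (nth_ord_enum (Ordinal hm) (Ordinal hm)).
Qed.

Theorem theorem3p15 (d : Order.disp_t) (L : finLatticeType d) (R : realFieldType)
    (phi : L -> R) (n : nat) (a : 'I_n -> L) (Psi : 'I_n.+1 -> {set L} -> R) :
  inM1 phi ->
  monotone_path a ->
  (forall i, inMinf (Psi i)) ->
  (* Pi(Psi_i) = lambda(phi_i; a_{i+1}, .), phi_i = Lambda_{a_1..a_i} phi *)
  (forall i : 'I_n, PiL (Psi (widen_ord (leqnSn n) i)) =
                    lam (Lams (apref a i) phi) (a i)) ->
  (* Pi(Psi_n) = phi_n *)
  PiL (Psi ord_max) = Lams (apref a n) phi ->
  forall (x : L) (k : nat), (1 <= k <= n)%N ->
    Lams (apref a k) phi x =
    integ (fun U => \sum_(i < n.+1) Psi i U) (piX x (apref a k)).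
Proof.
move=> hphi hpath hPsi H1 H2 x k /andP[hk1 hkn].
pose phis := fun m => Lams (apref a m) phi.
pose G := fun (l : 'I_n.+1) y => PiL (Psi l) y.
have hF0 l V : isUp V -> 0 <= mobius (Psi l) V.
  by move=> hV; apply: mob_ge0.
have hG l y : G l y = \sum_(V | isUp V && (y \in V)) mobius (Psi l) V.
  rewrite /G /PiL (mobSum _ (isUp_up y)); apply: eq_bigl => V.
  case hV: (isUp V) => //=.
  apply/subsetP/idP => [h | hy z]; first by apply: h; rewrite inE.
  by rewrite inE => hyz; exact: isUp_closed hV hy hyz.
have hG0 l y : 0 <= G l y.
  by rewrite hG; apply: sumr_ge0 => V /andP[hV _]; exact: hF0.
have hGm l y z : (y <= z)%O -> G l y <= G l z.
  move=> hyz; rewrite !hG !(big_mkcondr _ _ (@isUp _ L)); apply: ler_sum => V hV.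
  have hV' : isUp V := hV.
  case: (boolP (y \in V)) => hy; first by rewrite (isUp_closed hV' hy hyz).
  by case: (z \in V) => //; exact: hF0.
have hstep m (hm : (m < n)%N) y :
    phis m.+1 y = phis m y - lam (phis m) (a (Ordinal hm)) y.
  by rewrite /phis Lams_S.
have hH1 (j : 'I_n) y : G (widen_ord (leqnSn n) j) y = lam (phis j) (a j) y.
  by rewrite /G H1.
have hphisE : forall m, (m <= n)%N -> forall y, phis m y = \sum_(l < n.+1 | (m <= l)%N) G l y.
  move=> m0.
  suff H e : forall m, (m + e = n)%N -> forall y,
      phis m y = \sum_(l < n.+1 | (m <= l)%N) G l y.
    by move=> hm; apply: (H (n - m0)%N); rewrite subnKC.
  elim: e => [|e IH] m hme y.
    rewrite addn0 in hme; subst m.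
    rewrite (bigD1 ord_max) //= big1 ?addr0; first by rewrite /G H2.
    move=> l /andP[hl hne]; exfalso; apply: (negP hne); apply/eqP/val_inj => /=.
    by have := ltn_ord l; lia.
  have hm : (m < n)%N by lia.
  have E := hstep m hm y.
  rewrite (IH m.+1) in E; last by lia.
  rewrite (bigD1 (widen_ord (leqnSn n) (Ordinal hm))) //=.
  rewrite hH1 (eq_bigl (fun l : 'I_n.+1 => (m.+1 <= l)%N)); last first.
    by move=> l /=; rewrite -(inj_eq val_inj) /= ltn_neqAle eq_sym andbC.
  rewrite E; ring.
have hmono m : (m <= n)%N -> forall y z : L, (y <= z)%O -> phis m y <= phis m z.
  by move=> hm y z hyz; rewrite !hphisE //; apply: ler_sum => l _; exact: hGm.
have hn : (0 < n)%N by lia.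
have [t ht] := exists_top (a (Ordinal hn)).
have hA (j : 'I_n) V : isUp V -> a j \notin V ->
    mobius (Psi (widen_ord (leqnSn n) j)) V = 0.
  set w := widen_ord (leqnSn n) j.
  have hjn : (j <= n)%N by exact: ltnW (ltn_ord j).
  have tot : \sum_(V | isUp V) mobius (Psi w) V = G w t.
    rewrite hG; apply: eq_bigl => W; case hW: (isUp W) => //=.
    by rewrite (top_in ht hW).
  have hle : G w t <= G w (a j).
    rewrite !hH1 lam_aa; last exact: hmono.
    by apply: lam_le; exact: hmono.
  have h2 : \sum_(V | isUp V && (a j \notin V)) mobius (Psi w) V = 0.
    move: tot hle; rewrite (bigID (fun V : {set L} => a j \in V) (@isUp _ L)) /= (hG w (a j)).
    have : 0 <= \sum_(V | isUp V && (a j \notin V)) mobius (Psi w) V.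
      by apply: sumr_ge0 => W /andP[hW _]; exact: hF0.
    lra.
  move=> hV hV'; apply: (psumr_eq0P _ h2); last by rewrite hV hV'.
  by move=> W /andP[hW _]; exact: hF0.
have hB (j : 'I_n.+1) (i : 'I_n) : (i < j)%N -> forall V, isUp V -> a i \in V ->
    mobius (Psi j) V = 0.
  move=> hij.
  have h0 : phis i.+1 (a i) = 0.
    rewrite (hstep i (ltn_ord i)).
    have -> : Ordinal (ltn_ord i) = i by apply: val_inj.
    by rewrite lam_aa ?subrr //; apply: hmono; exact: ltnW (ltn_ord i).
  have : G j (a i) <= 0.
    rewrite -h0 hphisE; last exact: ltn_ord i.
    rewrite (bigD1 j) //= lerDl; apply: sumr_ge0 => l _; exact: hG0.
  have := hG0 j (a i); rewrite hG => hge hle.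
  have h2 : \sum_(V | isUp V && (a i \in V)) mobius (Psi j) V = 0.
    by apply/eqP; rewrite eq_le hle hge.
  move=> V hV hiV; apply: (psumr_eq0P _ h2); last by rewrite hV hiV.
  by move=> W /andP[hW _]; exact: hF0.
change (Lams (apref a k) phi x) with (phis k x); rewrite /integ.
under eq_bigr do rewrite mobius_sum mulr_suml.
rewrite exchange_big (hphisE k hkn x) big_mkcond /=; apply: eq_bigr => l _.
case: (leqP k l) => hkl.
  rewrite hG (big_mkcondr _ _ (@isUp _ L)) /=; apply: eq_bigr => V hV.
  rewrite /piX.
  have [hz|hnz] := eqVneq (mobius (Psi l) V) 0.
    by rewrite hz mul0r; case: ifP.
  have -> : all (fun b => b \notin V) (apref a k).
    rewrite /apref all_map; apply/allP => i hi /=; apply/negP => hiV.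
    apply/(negP hnz)/eqP; apply: (hB l i _ V hV hiV).
    by move: hi; rewrite memtake => hik; lia.
  by rewrite andbT; case: ifP; rewrite ?mulr1 ?mulr0.
rewrite big1 // => V hV.
have hl : (l < n)%N by lia.
have hw : l = widen_ord (leqnSn n) (Ordinal hl) by apply: val_inj.
rewrite /piX; case: (boolP (a (Ordinal hl) \in V)) => haj.
  have -> : all (fun b => b \notin V) (apref a k) = false.
    apply/negbTE/allPn; exists (a (Ordinal hl)); last by rewrite haj.
    by rewrite /apref map_f // memtake.
  by rewrite andbF mulr0.
have := hA (Ordinal hl) V hV haj; rewrite -hw => ->.
by rewrite mul0r.
Qed.
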